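(* Let $\mathcal A=\{0,1\}$ and ${\bf u}\in\mathcal A^{\mathbb N}$. If the language of ${\bf u}$ is closed under reversal and $D({\bf u})>0$, then there exists a non-palindromic factor $q$ of ${\bf u}$ such that $0q0$, $0q1$, $1q0$ and $1q1$ are all factors of ${\bf u}$.
   Context: $\widetilde w$ is the reversal of $w$; $w$ is a palindrome if $w=\widetilde w$. The language is closed under reversal if the reversal of every factor is a factor. Palindromic defect: for a finite word $w$ of length $n$, $D(w)=n+1-$(number of distinct palindromic factors of $w$, including the empty word), and $D({\bf u})=\sup D(w)$ over factors $w$ of ${\bf u}$. *)

(* Defs.v *)
From mathcomp Require Import all_boot.
Set Implicit Arguments. Unset Strict Implicit. Unset Printing Implicit Defensive.

(* Alphabet A = {0,1} encoded as bool: 0 = false, 1 = true.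
   An infinite word u in A^N is a function nat -> bool. *)
Definition infword := nat -> bool.

Definition subword (u : infword) (i n : nat) : seq bool :=
  mkseq (fun k => u (i + k)) n.

Definition factor (u : infword) (w : seq bool) : Prop :=
  exists i, w = subword u i (size w).

Definition palindrome (w : seq bool) : bool := w == rev w.

Definition closed_under_reversal (u : infword) : Prop :=
  forall w, factor u w -> factor u (rev w).

Definition factors_of (w : seq bool) : seq (seq bool) :=
  undup ([:: [::]] ++ [seq take j (drop i w) | i <- iota 0 (size w), j <- iota 1 (size w - i)]).

Definition num_pal (w : seq bool) : nat := count palindrome (factors_of w).

Definition defect (w : seq bool) : nat := size w + 1 - num_pal w.

(* D(u) = sup over factors of D(w); D(u) > 0 iff some factor has positive defect *)
Definition defect_pos (u : infword) : Prop :=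
  exists w, factor u w /\ 0 < defect w.

Example ex_defect : defect [:: false; false; true; false; true; true; false; false] = 1.
Proof. by []. Qed.

(* Main.v *)
Require Import Defs.
From Stdlib Require Import Classical_Prop.
From mathcomp Require Import all_boot zify.
From Stdlib Require Import Lia.
Set Implicit Arguments. Unset Strict Implicit. Unset Printing Implicit Defensive.

Section Aux.
Variable T : Type.
Implicit Types a b x y z : seq T.

Lemma cat_suffix a x b y : a ++ x = b ++ y -> size x <= size y ->
  exists z, y = z ++ x.
Proof.
move=> E Hs; exists (take (size y - size x) y).
set y2 := drop (size y - size x) y.
have Hy : y = take (size y - size x) y ++ y2 by rewrite cat_take_drop.
have Hs2 : size y2 = size x by rewrite /y2 size_drop subKn.
have E2 : a ++ x = (b ++ take (size y - size x) y) ++ y2 by rewrite -catA -Hy.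
have Ha : size a = size (b ++ take (size y - size x) y).
  by move: (congr1 size E2); rewrite !size_cat Hs2 => /eqP; rewrite eqn_add2r => /eqP.
have : drop (size a) (a ++ x) = drop (size a) ((b ++ take (size y - size x) y) ++ y2) by rewrite E2.
rewrite drop_size_cat // drop_size_cat // => HH; by rewrite -HH in Hy.
Qed.

Lemma cat_prefix x a y b : x ++ a = y ++ b -> size x <= size y ->
  exists z, y = x ++ z.
Proof.
move=> E Hs; exists (drop (size x) y).
have : take (size x) (x ++ a) = take (size x) (y ++ b) by rewrite E.
rewrite take_size_cat // takel_cat // => HH; by rewrite [X in X ++ _]HH cat_take_drop.
Qed.

Lemma catI x y z : x ++ y = x ++ z -> y = z.
Proof. by elim: x => //= w x IH [] /IH. Qed.
End Aux.

Lemma palE (w : seq bool) : palindrome w -> rev w = w.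
Proof. by move=> /eqP <-. Qed.

Lemma subwordD u i m n : subword u i (m + n) = subword u i m ++ subword u (i + m) n.
Proof.
rewrite /subword /mkseq iotaD map_cat; congr (_ ++ _).
rewrite add0n -[m]addn0 iotaDl -map_comp; apply: eq_map => k /=.
by rewrite addn0 addnA.
Qed.

Lemma factor_infix u x w y : factor u (x ++ w ++ y) -> factor u w.
Proof.
move=> [i E]; exists (i + size x).
move: E; rewrite !size_cat subwordD subwordD => /eqP.
rewrite eqseq_cat ?size_mkseq // => /andP [_ /eqP E].
by move: E => /eqP; rewrite eqseq_cat ?size_mkseq // => /andP [/eqP].
Qed.


Definition longest_pal_suffix (f P : seq bool) :=
  (exists s, f = s ++ P) /\ palindrome P /\
  (forall s' Z, f = s' ++ Z -> palindrome Z -> size Z <= size P).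

Definition NU (f : seq bool) :=
  exists P, longest_pal_suffix f P /\ exists s1 t, f = s1 ++ P ++ t /\ t <> [::].

Lemma lps_exists f : exists P, longest_pal_suffix f P.
Proof.
have ex : exists k, palindrome (drop k f) by exists (size f); rewrite drop_size.
case: (ex_minnP ex) => k Hk Hmin.
exists (drop k f); split; first by exists (take k f); rewrite cat_take_drop.
split => // s' Z E HZ.
have HZ' : palindrome (drop (size s') f) by rewrite E drop_size_cat.
have := Hmin _ HZ'; rewrite !size_drop E size_cat => H.
by rewrite addnC -addnBA // leq_addr.
Qed.

Lemma mem_factors_of x w : x \in factors_of w <-> exists a b, w = a ++ x ++ b.
Proof.
rewrite /factors_of mem_undup mem_cat inE; split.
  case/orP => [/eqP -> | ]; first by exists [::], w.
  case/allpairsPdep => i [j [_ _ ->]].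
  exists (take i w), (drop j (drop i w)).
  by rewrite cat_take_drop cat_take_drop.
case=> a [b E]; case: x E => [|z x] E; first by rewrite eqxx.
apply/orP; right; apply/allpairsPdep.
exists (size a), (size (z :: x)); rewrite !mem_iota E !size_cat /=.
split.
- lia.
- lia.
- by rewrite drop_size_cat // -cat_cons take_size_cat.
Qed.

Lemma count_lt (A B : seq (seq bool)) P : uniq A -> uniq B -> {subset A <= B} -> P \in B ->
  P \notin A -> palindrome P -> count palindrome A < count palindrome B.
Proof.
move=> uA uB sAB PB PA pP.
rewrite -!size_filter.
have : size (P :: filter palindrome A) <= size (filter palindrome B).
  apply: uniq_leq_size.
    by rewrite /= mem_filter negb_and PA orbT filter_uniq.
  move=> z; rewrite inE mem_filter => /orP [/eqP -> | /andP [pz zA]];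
    rewrite mem_filter; first by rewrite pP PB.
  by rewrite pz sAB.
by [].
Qed.

Lemma num_pal_nil : num_pal [::] = 1. Proof. by []. Qed.

Lemma L0 w : (forall v y t, w = rcons v y ++ t -> ~ NU (rcons v y)) -> size w + 1 <= num_pal w.
Proof.
elim/last_ind: w => [|v y IH] H; first by rewrite num_pal_nil.
have IH' : size v + 1 <= num_pal v.
  by apply: IH => v' y' t E; apply: (H v' y' (rcons t y)); rewrite E rcons_cat.
case: (lps_exists (rcons v y)) => P HP.
have Hnu : ~ NU (rcons v y) by apply: (H v y [::]); rewrite cats0.
have PnA : P \notin factors_of v.
  apply/negP => /mem_factors_of [a [b E]]; apply: Hnu; exists P; split => //.
  exists a, (rcons b y); split; first by rewrite E !rcons_cat.
  by case: b {E}.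
have PB : P \in factors_of (rcons v y).
  case: HP => [[s E] _]; apply/mem_factors_of; exists s, [::]; by rewrite cats0.
have sub : {subset factors_of v <= factors_of (rcons v y)}.
  move=> z /mem_factors_of [a [b E]]; apply/mem_factors_of; exists a, (rcons b y).
  by rewrite E !rcons_cat.
have := count_lt (undup_uniq _) (undup_uniq _) sub PB PnA (proj1 (proj2 HP)).
move=> h2.
have -> : size (rcons v y) + 1 = (size v + 1).+1 by rewrite size_rcons !addn1.
exact: leq_ltn_trans IH' h2.
Qed.


Definition Bad (r : seq bool) :=
  ~~ palindrome r /\ (forall s Z, r = s ++ Z -> palindrome Z -> exists t, r = Z ++ t) /\
  (forall Z t, r = Z ++ t -> palindrome Z -> exists s, r = s ++ Z).

Lemma L1_build f P s1 t : longest_pal_suffix f P -> f = s1 ++ P ++ t -> t <> [::] ->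
  (forall s1' t', f = s1' ++ P ++ t' -> t' <> [::] -> size t <= size t') ->
  Bad (P ++ t).
Proof.
move=> [[s Ef] [pP Hlong]] E tne M.
have [r0 Er0] : exists r0, P ++ t = r0 ++ P.
  apply: (@cat_suffix _ s P s1 (P ++ t)); first by rewrite -Ef.
  by rewrite size_cat leq_addr.
have tpos : 0 < size t by case: t tne {E M Er0} => //.
have np : ~~ palindrome (P ++ t).
  apply/negP => pr; have := Hlong s1 _ E pr; rewrite size_cat; lia.
split => //; split.
- move=> s' Z Er pZ.
  have hZ : size Z <= size P.
    apply: (Hlong (s1 ++ s') Z _ pZ). by rewrite E Er catA.
  have [P0 EP] : exists P0, P = P0 ++ Z.
    apply: (@cat_suffix _ s' Z r0 P); last by []. exact: (etrans (esym Er) Er0).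
  exists (rev P0 ++ t); rewrite catA; congr (_ ++ _).
  by rewrite -{1}(palE pP) EP rev_cat (palE pZ).
- move=> Z t0 Er pZ.
  case: (leqP (size Z) (size P)) => hZ.
    have [P1 EP] : exists P1, P = Z ++ P1.
      apply: (@cat_prefix _ Z t0 P t) => //.
    exists (r0 ++ rev P1); rewrite Er0 -catA; congr (_ ++ _).
    have : rev P = rev P1 ++ Z by rewrite {1}EP rev_cat (palE pZ).
    by rewrite (palE pP).
  have [Z1 EZ] : exists Z1, Z = P ++ Z1.
    apply: (@cat_prefix _ P t Z t0); [exact: Er | exact: ltnW].
  have EZ' : Z = rev Z1 ++ P.
    by rewrite -{1}(palE pZ) EZ rev_cat (palE pP).
  case: t0 Er => [|x t0] Er.
    exfalso; move: np; rewrite Er cats0 pZ.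
    by [].
  have := M (s1 ++ rev Z1) (x :: t0).
  rewrite E Er EZ' -!catA => /(_ erefl) /(_ ltac:(by [])).
  move: (congr1 size Er); rewrite !size_cat EZ' size_cat /= size_rev. move: hZ; rewrite EZ' size_cat size_rev. lia.
Qed.

Lemma L1 f : NU f -> exists s0 r, f = s0 ++ r /\ Bad r.
Proof.
case=> P [HP [s1 [t [E tne]]]].
suff key : forall n s1 t, size t <= n -> f = s1 ++ P ++ t -> t <> [::] ->
    exists s0 r, f = s0 ++ r /\ Bad r by exact: (key _ s1 t (leqnn _) E tne).
elim=> [|n IH] {}s1 {}t hn {}E {}tne.
  by case: t hn {E} tne.
case: (classic (exists s1' t', f = s1' ++ P ++ t' /\ t' <> [::] /\ size t' < size t)).
  case=> s1' [t' [E' [tne' lt']]]; apply: (IH s1' t') => //; lia.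
move=> Hno; exists s1, (P ++ t); split => //.
apply: (L1_build HP E tne) => s1' t' E' tne'.
rewrite leqNgt; apply/negP => lt'; apply: Hno; by exists s1', t'.
Qed.

Lemma nonpal_dec (r : seq bool) : ~~ palindrome r ->
  exists p a s b, r = p ++ a :: s ++ b :: rev p /\ a != b.
Proof.
move: {2}(size r) (leqnn (size r)) => n; elim: n r => [|n IH] r.
  by case: r.
case: r => [|x r'] // hs np.
case/lastP: r' hs np => [|m y] hs np.
  by rewrite /palindrome /= eqxx in np.
case: (eqVneq x y) => [exy|nxy].
  have npm : ~~ palindrome m.
    apply: contra np => /eqP pm; apply/eqP.
    by rewrite exy rev_cons rev_rcons -pm.
  have hm : size m <= n by move: hs; rewrite /= size_rcons; lia.
  case: (IH m hm npm) => p [a [s [b [Em nab]]]].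
  exists (x :: p), a, s, b; split => //.
  by rewrite Em exy rev_cons /= !rcons_cat /= rcons_cat.
exists [::], x, m, y; split => //.
by rewrite /= cats1.
Qed.

Lemma nseq_lem (c a : bool) q X Y : c :: q ++ a :: X = q ++ Y -> q = nseq (size q) c.
Proof.
elim: q Y => [|x q IH] Y //= [] exc E.
rewrite -exc in E *; congr (_ :: _); exact: (IH Y E).
Qed.

Lemma L3 (c a b : bool) q s f :
  f = c :: q ++ a :: s ++ b :: rev q ->
  a != b -> ~~ palindrome q ->
  (forall s' Z, rcons f c = s' ++ Z -> palindrome Z -> exists t, rcons f c = Z ++ t) ->
  (forall T, longest_pal_suffix f T -> forall s1 s2, f = s1 ++ T ++ s2 -> s2 = [::]) ->
  exists x y, rcons f c = x ++ (~~ c) :: q ++ b :: y.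
Proof.
move=> Ef nab npq HS Hmin.
case: (lps_exists f) => T HT.
have Hu := Hmin T HT.
case: HT => [[s0 Es0] [pT Hlong]].
case: (leqP (size T) (size q)) => hT.
  have [q0 Eq0] : exists q0, rev q = q0 ++ T.
    apply: (@cat_suffix _ s0 T (c :: q ++ a :: s ++ [:: b]) (rev q)).
      by rewrite -Es0 Ef /= -catA /= -catA.
    by rewrite size_rev.
  have Eq : q = T ++ rev q0 by rewrite -(revK q) Eq0 rev_cat (palE pT).
  have := Hu [:: c] (rev q0 ++ a :: s ++ b :: rev q).
  rewrite Ef {1}Eq /= -!catA => /(_ erefl).
  by case: (rev q0).
have [T0 ET0] : exists T0, T = T0 ++ b :: rev q.
  apply: (@cat_suffix _ (c :: q ++ a :: s) (b :: rev q) s0 T).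
    by rewrite -Es0 Ef /= -catA.
  by rewrite /= size_rev.
have ET : T = q ++ b :: rev T0.
  by rewrite -(palE pT) ET0 rev_cat rev_cons revK -cats1 -catA.
case/lastP: s0 Es0 => [|x d] Es0.
  exfalso; move: Es0; rewrite Ef /= ET => /(@nseq_lem c a q) Eq.
  by move: npq; rewrite Eq /palindrome rev_nseq eqxx.
have Er : rcons f c = x ++ d :: T ++ [:: c] by rewrite Es0 -cats1 -catA cat_rcons.
case: (eqVneq d c) => [edc|ndc].
  have pZ : palindrome (c :: T ++ [:: c]).
    by rewrite /palindrome cats1 rev_cons rev_rcons (palE pT).
  case: (HS x (c :: T ++ [:: c]) _ pZ); first by rewrite Er edc.
  move=> t1; rewrite Ef ET /= => [[]]; rewrite -cats1 -!catA => /catI [] eab _.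
  by rewrite eab eqxx in nab.
exists x, (rev T0 ++ [:: c]).
rewrite Er ET -catA /=.
have -> : d = ~~ c by move: ndc; case: (d); case: (c).
by [].
Qed.


Lemma cat_suffix_eq (T : Type) (a x b y : seq T) : a ++ x = b ++ y -> size x = size y -> x = y.
Proof.
move=> E hs; case: (cat_suffix E (eq_leq hs)) => z Ez.
by move: hs; rewrite Ez size_cat; case: z {Ez} => //= ? ?; lia.
Qed.

Definition goalP (u : infword) := exists q : seq bool, factor u q /\ ~~ palindrome q /\
    factor u (false :: rcons q false) /\ factor u (false :: rcons q true) /\
    factor u (true :: rcons q false) /\ factor u (true :: rcons q true).

Lemma finish u c a b q : a != b ->
  factor u (c :: q ++ [:: a]) -> factor u (c :: q ++ [:: b]) ->
  factor u (~~ c :: q ++ [:: a]) -> factor u (~~ c :: q ++ [:: b]) ->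
  ~~ palindrome q -> goalP u.
Proof.
move=> nab f1 f2 f3 f4 npq; exists q; split.
  by apply: (@factor_infix u [:: c] q [:: a]).
rewrite -!cats1; split => //.
by case: c a b nab f1 f2 f3 f4 => [] [] [] //= _; do ! split.
Qed.

Lemma hmin_or u f : (forall r, size r <= size f -> factor u r -> Bad r -> goalP u) ->
  factor u f ->
  goalP u \/ (forall T, longest_pal_suffix f T -> forall s1 s2, f = s1 ++ T ++ s2 -> s2 = [::]).
Proof.
move=> IH ff.
case: (classic (exists T s1 s2, longest_pal_suffix f T /\ f = s1 ++ T ++ s2 /\ s2 <> [::])).
  case=> T [s1 [s2 [HT [E ne]]]].
  have [s0 [r [Er Br]]] : exists s0 r, f = s0 ++ r /\ Bad r.
    apply: L1; exists T; split => //; by exists s1, s2.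
  left; apply: (IH r).
  - by rewrite Er size_cat leq_addl.
  - apply: (@factor_infix u s0 r [::]); by rewrite cats0 -Er.
  - exact: Br.
move=> H; right => T HT s1 s2 E.
case: (classic (s2 = [::])) => // ne; exfalso; apply: H; by exists T, s1, s2.
Qed.

Lemma main_ind u : closed_under_reversal u ->
  forall n r, size r <= n -> factor u r -> Bad r -> goalP u.
Proof.
move=> Hrev; elim=> [|n IH] r hn fr [np [HS HP]].
  by clear fr HS HP; case: r hn np.
case: (nonpal_dec np) => p [a [s [b [Er nab]]]].
case: p Er => [|c q] Er.
  case: (HS (a :: s) [:: b]); first by rewrite Er /= cats1.
  - by rewrite /palindrome /= eqxx.
  move=> t; rewrite Er /= => [[eab]]; by rewrite eab eqxx in nab.
set f1 := c :: q ++ a :: s ++ b :: rev q.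
have Er1 : r = rcons f1 c by rewrite Er /f1 rev_cons /= rcons_cat /= rcons_cat.
set f2 := c :: q ++ b :: rev s ++ a :: rev q.
have Er2 : rev r = rcons f2 c.
  rewrite Er1 rev_rcons /f1 rev_cons rev_cat /= rev_cons rev_cat /= rev_cons revK.
  by rewrite /f2 -!cats1 -!catA /= -?catA /= -?catA.
have npq : ~~ palindrome q.
  apply/negP => pq; have rq := palE pq.
  have [eac | ebc] : a = c \/ b = c by move: nab; case: (a); case: (b); case: (c); auto.
  - have pZ : palindrome (c :: q ++ [:: c]).
      by rewrite /palindrome rev_cons rev_cat rq /= cats1.
    case: (HP (c :: q ++ [:: c]) (s ++ b :: rev q ++ [:: c]) _ pZ).
      by rewrite Er /= eac -catA /= rev_cons cats1.
    move=> s' Es'.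
    have := @cat_suffix_eq _ s' (c :: q ++ [:: c]) (c :: q ++ a :: s) (b :: rev q ++ [:: c]).
    rewrite -Es' Er /= rev_cons -cats1 -!catA /= !size_cat size_rev => /(_ erefl erefl) [ecb].
    by move: nab; rewrite eac ecb eqxx.
  - have pZ : palindrome (b :: rev q ++ [:: c]).
      by rewrite /palindrome rev_cons rev_cat revK ebc rq /= cats1.
    case: (HS (c :: q ++ a :: s) (b :: rev q ++ [:: c]) _ pZ).
      by rewrite Er rev_cons -cats1 /= -!catA.
    move=> t; rewrite Er /= ebc rq => [[]]; rewrite -!catA => /catI [eab].
    by move: nab; rewrite eab ebc eqxx.
have fr' : factor u (rev r) by apply: Hrev.
have IH' : forall r', size r' <= size f1 -> factor u r' -> Bad r' -> goalP u.
  move=> r' h1; apply: IH; move: hn h1; rewrite Er1 size_rcons; lia.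
have IH'' : forall r', size r' <= size f2 -> factor u r' -> Bad r' -> goalP u.
  move=> r' h1; apply: IH; move: hn h1; rewrite -size_rev Er2 size_rcons; lia.
have ff1 : factor u f1 by apply: (@factor_infix u [::] f1 [:: c]); rewrite cats1 -Er1.
have ff2 : factor u f2 by apply: (@factor_infix u [::] f2 [:: c]); rewrite cats1 -Er2.
case: (hmin_or IH' ff1) => // Hm1.
case: (hmin_or IH'' ff2) => // Hm2.
have HSr : forall s' Z, rcons f1 c = s' ++ Z -> palindrome Z -> exists t, rcons f1 c = Z ++ t.
  by rewrite -Er1.
have HSr2 : forall s' Z, rcons f2 c = s' ++ Z -> palindrome Z -> exists t, rcons f2 c = Z ++ t.
  rewrite -Er2 => s' Z E pZ.
  case: (HP Z (rev s')); first by rewrite -(revK r) E rev_cat (palE pZ).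
    exact: pZ.
  move=> s'' E'; exists (rev s''); by rewrite E' rev_cat (palE pZ).
have [x1 [y1 E1]] := L3 (erefl f1) nab npq HSr Hm1.
have nba : b != a by rewrite eq_sym.
have [x2 [y2 E2]] := L3 (erefl f2) nba npq HSr2 Hm2.
apply: (finish (c := c) nab).
- apply: (@factor_infix u [::] _ (s ++ b :: rev q ++ [:: c])).
  suff HH : [::] ++ (c :: q ++ [:: a]) ++ s ++ b :: rev q ++ [:: c] = r by move: fr; rewrite -HH => HH2; exact: HH2.
  rewrite Er; do 4! rewrite ?rev_cons -?cats1 -?catA /=; done.
- apply: (@factor_infix u [::] _ (rev s ++ a :: rev q ++ [:: c])).
  suff HH : [::] ++ (c :: q ++ [:: b]) ++ rev s ++ a :: rev q ++ [:: c] = rev r by move: fr'; rewrite -HH => HH2; exact: HH2.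
  rewrite Er2 /f2; do 4! rewrite ?rev_cons -?cats1 -?catA /=; done.
- apply: (@factor_infix u x2 _ y2).
  suff HH : x2 ++ (~~ c :: q ++ [:: a]) ++ y2 = rev r by move: fr'; rewrite -HH => HH2; exact: HH2.
  rewrite Er2 E2; do 4! rewrite ?rev_cons -?cats1 -?catA /=; done.
- apply: (@factor_infix u x1 _ y1).
  suff HH : x1 ++ (~~ c :: q ++ [:: b]) ++ y1 = r by move: fr; rewrite -HH => HH2; exact: HH2.
  rewrite Er1 E1; do 4! rewrite ?rev_cons -?cats1 -?catA /=; done.
- exact: npq.
Qed.


Theorem lemma23 (u : infword) :
  closed_under_reversal u -> defect_pos u ->
  exists q : seq bool, factor u q /\ ~~ palindrome q /\
    factor u (false :: rcons q false) /\ factor u (false :: rcons q true) /\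
    factor u (true :: rcons q false) /\ factor u (true :: rcons q true).
Proof.
move=> Hrev [w [fw dw]].
case: (classic (exists v y t, w = rcons v y ++ t /\ NU (rcons v y))).
  case=> v [y [t [Ew Hnu]]].
  have [s0 [r [Er Br]]] := L1 Hnu.
  have fr : factor u r.
    apply: (@factor_infix u s0 r t); rewrite catA -Er -Ew; exact: fw.
  exact: (main_ind Hrev (leqnn (size r)) fr Br).
move=> Hno; exfalso.
have := L0 (w := w) (fun v y t E HN => Hno (ex_intro _ v (ex_intro _ y (ex_intro _ t (conj E HN))))).
move: dw; rewrite /defect; lia.
Qed.
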